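(* For real hopping amplitudes $s,t$ with $|s|\neq |t|$, and arbitrary real interface hopping amplitudes $u_L,u_R$, the SSH interface Hamiltonian $H_{\rm SSH}$ has a bulk spectral gap (around $0$) and an odd number of zero modes, i.e. $\dim\ker H_{\rm SSH}$ is odd.
   Context: Pauli matrices $\sigma_1=\begin{pmatrix}0&1\\1&0\end{pmatrix}$, $\sigma_3=\begin{pmatrix}1&0\\0&-1\end{pmatrix}$. Consider the Hilbert space $\ell^2(-\mathbf{N};\mathbf{C}^2)\oplus\mathbf{C}\oplus\ell^2(\mathbf{N};\mathbf{C}^2)$, with sequences $\psi=(\psi_n)$, $\psi_n\in\mathbf{C}^2$ for $n\neq 0$ and $\psi_0\in\mathbf{C}$. The interface Hamiltonian $H_{\rm int}(A_L,V_L,A_R,V_R;B_L,B_R,W)$ acts as $(H_{\rm int}\psi)_n=A_R^*\psi_{n-1}+A_R\psi_{n+1}+V_R\psi_n$ for $n\geq 2$; $=B_R^*\psi_0+A_R\psi_2+V_R\psi_1$ for $n=1$; $=B_L^*\psi_{-1}+B_R\psi_1+W\psi_0$ for $n=0$; $=A_L^*\psi_{-2}+B_L\psi_0+V_L\psi_{-1}$ for $n=-1$; $=A_L^*\psi_{n-1}+A_L\psi_{n+1}+V_L\psi_n$ for $n\leq -2$, where $A_L,A_R,V_L,V_R$ are $2\times2$ matrices, $B_L^*,B_R$ are $1\times 2$ matrices and $W\in\mathbf{R}$. The SSH model Hamiltonian is $H_{\rm SSH}=H_{\rm int}(A,V,A,V;B_L,B_R,0)$ with $V=s\sigma_1$,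 $A=\begin{pmatrix}0&0\\t&0\end{pmatrix}$, $B_R=(u_R\;\;0)$, $B_L^*=(0\;\;u_L)$, $s,t,u_L,u_R\in\mathbf{R}$. It is chiral symmetric with respect to a sublattice grading (on each side the two components of $\mathbf{C}^2$ are the two sublattices, arranged so that the left side is the mirror image of the right, and the $n=0$ site belongs to one sublattice), i.e. $H_{\rm SSH}$ anticommutes with this grading. *)

(* Defs.v *)
From Stdlib Require Import Reals ZArith Arith.
From Coquelicot Require Import Coquelicot.

Open Scope R_scope.

Definition C2 : Type := (C * C)%type.
Definition C2zero : C2 := (RtoC 0, RtoC 0).
Definition C2add (x y : C2) : C2 := (Cplus (fst x) (fst y), Cplus (snd x) (snd y)).
Definition C2scal (a : C) (x : C2) : C2 := (Cmult a (fst x), Cmult a (snd x)).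
Definition C2norm2 (x : C2) : R := (Cmod (fst x))^2 + (Cmod (snd x))^2.

Record M2 : Type := mkM2 { m11 : C; m12 : C; m21 : C; m22 : C }.
Definition mv (M : M2) (x : C2) : C2 :=
  (Cplus (Cmult (m11 M) (fst x)) (Cmult (m12 M) (snd x)),
   Cplus (Cmult (m21 M) (fst x)) (Cmult (m22 M) (snd x))).
Definition madj (M : M2) : M2 :=
  mkM2 (Cconj (m11 M)) (Cconj (m21 M)) (Cconj (m12 M)) (Cconj (m22 M)).

(** A 1x2 matrix (row) r = (r1 r2): acts C^2 -> C;
    its adjoint r^* is a 2x1 matrix acting C -> C^2. *)
Definition row_act (r : C2) (x : C2) : C :=
  Cplus (Cmult (fst r) (fst x)) (Cmult (snd r) (snd x)).
Definition row_adj_act (r : C2) (c : C) : C2 :=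
  (Cmult (Cconj (fst r)) c, Cmult (Cconj (snd r)) c).

Definition sigma1 : M2 := mkM2 (RtoC 0) (RtoC 1) (RtoC 1) (RtoC 0).
Definition sigma3 : M2 := mkM2 (RtoC 1) (RtoC 0) (RtoC 0) (RtoC (-1)).
Definition rscal (s : R) (M : M2) : M2 :=
  mkM2 (Cmult (RtoC s) (m11 M)) (Cmult (RtoC s) (m12 M))
       (Cmult (RtoC s) (m21 M)) (Cmult (RtoC s) (m22 M)).
Definition V_SSH (s : R) : M2 := rscal s sigma1.
Definition A_SSH (t : R) : M2 := mkM2 (RtoC 0) (RtoC 0) (RtoC t) (RtoC 0).

(** A state is stored as three pieces:
      psiL k = psi_{-(k+1)}  (k : nat, so n = -1, -2, ...)
      psi0   = psi_0 in C
      psiR k = psi_{k+1}     (k : nat, so n = 1, 2, ...). *)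
Record St : Type := mkSt { psiL : nat -> C2; psi0 : C; psiR : nat -> C2 }.

Definition is_l2_nat (f : nat -> C2) : Prop := ex_series (fun k => C2norm2 (f k)).
Definition in_Hint (psi : St) : Prop := is_l2_nat (psiL psi) /\ is_l2_nat (psiR psi).

Definition St_zero : St := mkSt (fun _ => C2zero) (RtoC 0) (fun _ => C2zero).
Definition St_add (x y : St) : St :=
  mkSt (fun k => C2add (psiL x k) (psiL y k)) (Cplus (psi0 x) (psi0 y))
       (fun k => C2add (psiR x k) (psiR y k)).
Definition St_scal (a : C) (x : St) : St :=
  mkSt (fun k => C2scal a (psiL x k)) (Cmult a (psi0 x)) (fun k => C2scal a (psiR x k)).
Fixpoint St_lincomb (d : nat) (c : nat -> C) (b : nat -> St) : St :=
  match d with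
  | O => St_zero
  | S d' => St_add (St_lincomb d' c b) (St_scal (c d') (b d'))
  end.

(** * The interface Hamiltonian H_int(A_L,V_L,A_R,V_R;B_L,B_R,W).
    [BR] is the row B_R, [BLs] is the row B_L^*. *)
Definition H_int (AL VL AR VR : M2) (BLs BR : C2) (W : R) (psi : St) : St :=
  mkSt
    (* n = -(k+1) *)
    (fun k => match k with
              | O => (* n = -1 *)
                  C2add (C2add (mv (madj AL) (psiL psi 1))
                               (row_adj_act BLs (psi0 psi)))
                        (mv VL (psiL psi 0))
              | S k' => (* n = -(k'+2) <= -2 *)
                  C2add (C2add (mv (madj AL) (psiL psi (S k)))
                               (mv AL (psiL psi k')))
                        (mv VL (psiL psi k))
              end)
    (* n = 0 *)
    (Cplus (Cplus (row_act BLs (psiL psi 0)) (row_act BR (psiR psi 0)))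
           (Cmult (RtoC W) (psi0 psi)))
    (* n = k+1 *)
    (fun k => match k with
              | O => (* n = 1 *)
                  C2add (C2add (row_adj_act BR (psi0 psi)) (mv AR (psiR psi 1)))
                        (mv VR (psiR psi 0))
              | S k' => (* n = k'+2 >= 2 *)
                  C2add (C2add (mv (madj AR) (psiR psi k')) (mv AR (psiR psi (S k))))
                        (mv VR (psiR psi k))
              end).

Definition H_SSH (s t uL uR : R) : St -> St :=
  H_int (A_SSH t) (V_SSH s) (A_SSH t) (V_SSH s)
        (RtoC 0, RtoC uL) (RtoC uR, RtoC 0) 0.

Definition in_ker (H : St -> St) (psi : St) : Prop := in_Hint psi /\ H psi = St_zero.

Definition ker_dim (H : St -> St) (d : nat) : Prop :=
  exists b : nat -> St,
    (forall i, (i < d)%nat -> in_ker H (b i)) /\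
    (forall c : nat -> C, St_lincomb d c b = St_zero -> forall i, (i < d)%nat -> c i = RtoC 0) /\
    (forall psi, in_ker H psi -> exists c : nat -> C, psi = St_lincomb d c b).

Definition H_bulk (A V : M2) (psi : Z -> C2) : Z -> C2 :=
  fun n => C2add (C2add (mv (madj A) (psi (n - 1)%Z)) (mv A (psi (n + 1)%Z))) (mv V (psi n)).

Definition is_l2_Z (f : Z -> C2) : Prop :=
  ex_series (fun k => C2norm2 (f (Z.of_nat k))) /\
  ex_series (fun k => C2norm2 (f (- Z.of_nat (S k))%Z)).
Definition norm2_Z (f : Z -> C2) : R :=
  Series (fun k => C2norm2 (f (Z.of_nat k))) + Series (fun k => C2norm2 (f (- Z.of_nat (S k))%Z)).

Definition in_resolvent_Z (H : (Z -> C2) -> (Z -> C2)) (lam : C) : Prop :=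
  exists G : (Z -> C2) -> (Z -> C2),
    (forall phi, is_l2_Z phi -> is_l2_Z (G phi)) /\
    (forall phi, is_l2_Z phi ->
       (fun n => C2add (H (G phi) n) (C2scal (Copp lam) (G phi n))) = phi) /\
    (forall psi, is_l2_Z psi ->
       G (fun n => C2add (H psi n) (C2scal (Copp lam) (psi n))) = psi) /\
    (exists K : R, forall phi, is_l2_Z phi -> norm2_Z (G phi) <= K * norm2_Z phi).

Definition in_spectrum_Z (H : (Z -> C2) -> (Z -> C2)) (lam : C) : Prop :=
  ~ in_resolvent_Z H lam.

Definition spectral_gap_at_0 (H : (Z -> C2) -> (Z -> C2)) : Prop :=
  exists delta : R, 0 < delta /\
    forall lam : R, Rabs lam < delta -> ~ in_spectrum_Z H (RtoC lam).

(* Main.v *)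
Require Import Defs.
From Stdlib Require Import Reals ZArith Arith.
From Coquelicot Require Import Coquelicot.
From Stdlib Require Import Lra Lia Psatz FunctionalExtensionality.
Open Scope R_scope.

Fixpoint fsum (h : nat -> R) (L : nat) : R :=
  match L with O => 0 | S L' => fsum h L' + h L' end.

Lemma fsum_ext h g L : (forall i, (i < L)%nat -> h i = g i) -> fsum h L = fsum g L.
Proof. induction L; simpl; intros; auto. rewrite IHL; [rewrite H|]; auto; lia. Qed.

Lemma fsum_nonneg h L : (forall i, 0 <= h i) -> 0 <= fsum h L.
Proof. intros; induction L; simpl; [lra|]. specialize (H L); lra. Qed.

Lemma fsum_le h g L : (forall i, h i <= g i) -> fsum h L <= fsum g L.
Proof. intros; induction L; simpl; [lra|]. specialize (H L); lra. Qed.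

Lemma fsum_plus h g L : fsum (fun i => h i + g i) L = fsum h L + fsum g L.
Proof. induction L; simpl; lra. Qed.

Lemma fsum_scal c h L : fsum (fun i => c * h i) L = c * fsum h L.
Proof. induction L; simpl; [ring|]. rewrite IHL; ring. Qed.

Lemma sum_n_fsum (a : nat -> R) n : sum_n a n = fsum a (S n).
Proof.
  induction n. rewrite sum_O. simpl. change (a 0%nat = 0 + a 0%nat). ring.
  rewrite sum_Sn, IHn. change (fsum a (S n) + a (S n) = fsum a (S (S n))). simpl. ring.
Qed.

Lemma series_is_lim a : ex_series a -> is_lim_seq (sum_n a) (Series a).
Proof. intros H. apply Series_correct in H. exact H. Qed.

Lemma fsum_le_series a : (forall k, 0 <= a k) -> ex_series a -> forall n, fsum a n <= Series a.
Proof.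
  intros Hp He n.
  assert (Hm : forall m, fsum a n <= fsum a (m + n)).
  { induction m; simpl; [lra|]. specialize (Hp (m+n)%nat); lra. }
  assert (Hl : is_lim_seq (fun m => fsum a (S (m + n))) (Series a)).
  { apply (is_lim_seq_incr_n (fun m => fsum a (S m)) n).
    eapply is_lim_seq_ext; [|apply series_is_lim; auto]. intros; apply sum_n_fsum. }
  assert (H := is_lim_seq_le (fun _ => fsum a n) _ _ _ (fun m => Rle_trans _ _ _ (Hm m)
     (Rle_trans _ _ _ (Rle_refl _) (ltac:(simpl; specialize (Hp (m+n)%nat); lra) : fsum a (m+n) <= fsum a (S (m+n)))))
     (is_lim_seq_const _) Hl).
  simpl in H; auto.
Qed.

Lemma bounded_series a M : (forall k, 0 <= a k) -> (forall n, fsum a n <= M) ->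
  ex_series a /\ Series a <= M.
Proof.
  intros Hp Hb.
  assert (Hf : ex_finite_lim_seq (sum_n a)).
  { apply (ex_finite_lim_seq_incr _ M).
    - intros n; rewrite !sum_n_fsum; simpl; specialize (Hp (S n)); simpl in *; lra.
    - intros n; rewrite sum_n_fsum; auto. }
  destruct Hf as [l Hl].
  assert (He : ex_series a) by (exists l; exact Hl).
  split; auto.
  assert (H := is_lim_seq_le _ (fun _ => M) _ _ (fun n => ltac:(rewrite sum_n_fsum; apply Hb)) (series_is_lim a He) (is_lim_seq_const M)).
  simpl in H; auto.
Qed.
Definition W (h : Z -> R) (a : Z) (L : nat) : R := fsum (fun i => h (a + Z.of_nat i)%Z) L.

Lemma W_split h a p q : W h a (p + q) = W h a p + W h (a + Z.of_nat p)%Z q.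
Proof.
  unfold W. induction q; simpl. rewrite Nat.add_0_r; ring.
  rewrite Nat.add_succ_r; simpl. rewrite IHq.
  replace (a + Z.of_nat (p + q))%Z with (a + Z.of_nat p + Z.of_nat q)%Z by lia. ring.
Qed.

Lemma W_nonneg h a L : (forall n, 0 <= h n) -> 0 <= W h a L.
Proof. intros; apply fsum_nonneg; auto. Qed.

Lemma W_mono h a L b L' : (forall n, 0 <= h n) -> (b <= a)%Z -> (a + Z.of_nat L <= b + Z.of_nat L')%Z ->
  W h a L <= W h b L'.
Proof.
  intros Hp H1 H2.
  set (p := Z.to_nat (a - b)).
  set (r := (L' - p - L)%nat).
  assert (E : L' = (p + (L + r))%nat) by (unfold r, p; lia).
  rewrite E, W_split, W_split.
  replace (b + Z.of_nat p)%Z with a by (unfold p; lia).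
  pose proof (W_nonneg h b p Hp); pose proof (W_nonneg h (a + Z.of_nat L) r Hp). lra.
Qed.

Lemma W_sym h M : W h (- Z.of_nat M) (2 * M) =
  fsum (fun k => h (Z.of_nat k)) M + fsum (fun k => h (- Z.of_nat (S k))%Z) M.
Proof.
  induction M. unfold W; simpl; ring.
  replace (2 * S M)%nat with (1 + (2 * M + 1))%nat by lia.
  rewrite W_split, W_split.
  replace (- Z.of_nat (S M) + Z.of_nat 1)%Z with (- Z.of_nat M)%Z by lia.
  rewrite IHM. unfold W; simpl.
  replace (- Z.of_nat (S M) + 0)%Z with (- Z.of_nat (S M))%Z by lia.
  replace (- Z.of_nat M + Z.of_nat (2 * M) + 0)%Z with (Z.of_nat M) by lia.
  replace (- Z.of_nat M + Z.of_nat (M + (M + 0)) + 0)%Z with (Z.of_nat M) by lia. ring.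
Qed.

Definition l2 (f : Z -> R) : Prop :=
  ex_series (fun k => f (Z.of_nat k) ^ 2) /\ ex_series (fun k => f (- Z.of_nat (S k))%Z ^ 2).
Definition N (f : Z -> R) : R :=
  Series (fun k => f (Z.of_nat k) ^ 2) + Series (fun k => f (- Z.of_nat (S k))%Z ^ 2).
Definition sq (f : Z -> R) : Z -> R := fun n => f n ^ 2.

Lemma sq_nonneg f n : 0 <= sq f n.
Proof. unfold sq; nra. Qed.

Lemma W_le_N f : l2 f -> forall a L, W (sq f) a L <= N f.
Proof.
  intros [H1 H2] a L.
  set (M := (Z.to_nat (Z.abs a) + L)%nat).
  apply Rle_trans with (W (sq f) (- Z.of_nat M) (2 * M)).
  { apply W_mono. apply sq_nonneg. unfold M; lia. unfold M; lia. }
  rewrite W_sym. unfold N, sq.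
  pose proof (fsum_le_series (fun k => f (Z.of_nat k) ^ 2) (fun k => ltac:(nra)) H1 M).
  pose proof (fsum_le_series (fun k => f (- Z.of_nat (S k))%Z ^ 2) (fun k => ltac:(nra)) H2 M).
  lra.
Qed.

Lemma W_bound f B : (forall a L, W (sq f) a L <= B) -> l2 f /\ N f <= B.
Proof.
  intros Hb.
  assert (Hs : forall M, fsum (fun k => f (Z.of_nat k) ^ 2) M + fsum (fun k => f (- Z.of_nat (S k))%Z ^ 2) M <= B).
  { intros M; rewrite <- (W_sym (sq f)); apply Hb. }
  assert (P1 : forall M, 0 <= fsum (fun k => f (Z.of_nat k) ^ 2) M) by (intros; apply fsum_nonneg; intros; nra).
  assert (P2 : forall M, 0 <= fsum (fun k => f (- Z.of_nat (S k))%Z ^ 2) M) by (intros; apply fsum_nonneg; intros; nra).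
  destruct (bounded_series (fun k => f (Z.of_nat k) ^ 2) B (fun k => ltac:(nra))) as [E1 _].
  { intros n; specialize (Hs n); specialize (P2 n); lra. }
  destruct (bounded_series (fun k => f (- Z.of_nat (S k))%Z ^ 2) B (fun k => ltac:(nra))) as [E2 _].
  { intros n; specialize (Hs n); specialize (P1 n); lra. }
  split; [split; auto|].
  assert (L1 := series_is_lim _ E1). assert (L2 := series_is_lim _ E2).
  assert (L3 := is_lim_seq_plus' _ _ _ _ L1 L2).
  assert (Hs' : forall n, sum_n (fun k : nat => f (Z.of_nat k) ^ 2) n +
     sum_n (fun k : nat => f (- Z.of_nat (S k))%Z ^ 2) n <= B).
  { intros n. rewrite (sum_n_fsum (fun k : nat => f (Z.of_nat k) ^ 2)).
    rewrite (sum_n_fsum (fun k : nat => f (- Z.of_nat (S k))%Z ^ 2)). apply Hs. }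
  assert (H := is_lim_seq_le _ (fun _ => B) _ _ Hs' L3 (is_lim_seq_const B)).
  exact H.
Qed.

Lemma N_nonneg f : l2 f -> 0 <= N f.
Proof. intros H; pose proof (W_le_N f H 0%Z 0); unfold W in *; simpl in *; lra. Qed.

Lemma l2_pt f : l2 f -> forall n, f n ^ 2 <= N f.
Proof. intros H n; pose proof (W_le_N f H n 1); unfold W, sq in *; simpl in *.
  replace (n + 0)%Z with n in H0 by lia. lra. Qed.

Lemma l2_bd f : l2 f -> forall n, Rabs (f n) <= 1 + N f.
Proof. intros H n; pose proof (l2_pt f H n). pose proof (N_nonneg f H).
  unfold Rabs; destruct Rcase_abs; nra. Qed.

Lemma l2_comb f g a b : l2 f -> l2 g ->
  l2 (fun n => a * f n + b * g n) /\ N (fun n => a * f n + b * g n) <= 2 * a^2 * N f + 2 * b^2 * N g.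
Proof.
  intros Hf Hg. apply W_bound. intros x L.
  apply Rle_trans with (2 * a^2 * W (sq f) x L + 2 * b^2 * W (sq g) x L).
  { unfold W. rewrite <- !fsum_scal, <- fsum_plus. apply fsum_le. intros i; unfold sq.
    set (u := f _); set (v := g _). pose proof (pow2_ge_0 (a*u - b*v)). nra. }
  pose proof (W_le_N f Hf x L); pose proof (W_le_N g Hg x L). nra.
Qed.

Lemma l2_shift f d : l2 f -> l2 (fun n => f (n + d)%Z) /\ N (fun n => f (n + d)%Z) <= N f.
Proof.
  intros Hf; apply W_bound; intros a L.
  replace (W (sq (fun n => f (n + d)%Z)) a L) with (W (sq f) (a + d) L).
  apply W_le_N; auto. unfold W, sq; apply fsum_ext; intros; f_equal; f_equal; lia.
Qed.
Definition Bd (f : Z -> R) (M : R) := forall n, Rabs (f n) <= M.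

Lemma l2_Bd f : l2 f -> Bd f (1 + N f).
Proof. intros H n; apply l2_bd; auto. Qed.

Definition Rop (al : R) (sg : Z) (f : Z -> R) (n : Z) : R :=
  Series (fun k => al ^ k * f (n + sg * Z.of_nat k)%Z).

Lemma norm_R (x : R) : norm x = Rabs x.
Proof. reflexivity. Qed.

Lemma ex_geom_scal al M : Rabs al < 1 -> ex_series (fun k => M * Rabs al ^ k).
Proof.
  intros H. apply (ex_series_scal_l M (fun k => Rabs al ^ k)). apply ex_series_geom.
  rewrite Rabs_Rabsolu; auto.
Qed.

Lemma ex_series_dom (a : nat -> R) b : (forall k, Rabs (a k) <= b k) -> ex_series b -> ex_series a.
Proof. intros H Hb; apply (ex_series_le a b); auto. Qed.

Lemma Rop_ex al sg f M n : Rabs al < 1 -> Bd f M -> ex_series (fun k => al ^ k * f (n + sg * Z.of_nat k)%Z).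
Proof.
  intros Ha Hf. apply ex_series_dom with (fun k => M * Rabs al ^ k); [|apply ex_geom_scal; auto].
  intros k. rewrite Rabs_mult, <- RPow_abs. specialize (Hf (n + sg * Z.of_nat k)%Z).
  pose proof (pow_le (Rabs al) k (Rabs_pos al)). nra.
Qed.

Lemma Rop_rec al sg f M n : Rabs al < 1 -> Bd f M -> Rop al sg f n = f n + al * Rop al sg f (n + sg)%Z.
Proof.
  intros Ha Hf. unfold Rop. rewrite Series_incr_1 by (eapply Rop_ex; eauto).
  rewrite <- Series_scal_l. f_equal.
  - replace (n + sg * Z.of_nat 0)%Z with n by lia. cbn [pow]. ring.
  - apply Series_ext; intros k. replace (n + sg * Z.of_nat (S k))%Z with (n + sg + sg * Z.of_nat k)%Z by lia. cbn [pow]. ring.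
Qed.

Lemma Rop_lin al sg f g a b M1 M2 n : Rabs al < 1 -> Bd f M1 -> Bd g M2 ->
  Rop al sg (fun m => a * f m + b * g m) n = a * Rop al sg f n + b * Rop al sg g n.
Proof.
  intros Ha Hf Hg. unfold Rop. rewrite <- !Series_scal_l, <- Series_plus.
  - apply Series_ext; intros; ring.
  - apply (ex_series_scal_l a (fun k => al ^ k * f (n + sg * Z.of_nat k)%Z)); eapply Rop_ex; eauto.
  - apply (ex_series_scal_l b (fun k => al ^ k * g (n + sg * Z.of_nat k)%Z)); eapply Rop_ex; eauto.
Qed.

Lemma Rop_shift al sg f d n : Rop al sg (fun m => f (m + d)%Z) n = Rop al sg f (n + d)%Z.
Proof. unfold Rop; apply Series_ext; intros; do 2 f_equal; lia. Qed.

Lemma cs_step A B C p x : B^2 <= A * C -> 0 <= A -> 0 <= C ->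
  (B + p * x)^2 <= (A + Rabs p) * (C + Rabs p * x^2).
Proof.
  intros H1 H2 H3.
  assert (K : 2 * Rabs B * Rabs x <= A * x^2 + C).
  { assert (Ex : Rabs x ^ 2 = x ^ 2) by (unfold Rabs; destruct Rcase_abs; ring).
    assert (Eb : Rabs B ^ 2 = B ^ 2) by (unfold Rabs; destruct Rcase_abs; ring).
    pose proof (Rabs_pos B); pose proof (Rabs_pos x).
    destruct (Req_dec A 0) as [HA|HA].
    - subst A. assert (B = 0) by nra. subst B. rewrite Rabs_R0. nra.
    - assert (0 < A) by lra. pose proof (pow2_ge_0 (A * Rabs x - Rabs B)).
      assert (A * (A * x^2 + C - 2 * Rabs B * Rabs x) >= 0) by nra. nra. }
  assert (K2 : 2 * B * p * x <= Rabs p * (A * x^2 + C)).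
  { assert (2 * B * p * x <= 2 * Rabs B * Rabs p * Rabs x).
    { pose proof (Rle_abs (B * p * x)) as HH. rewrite !Rabs_mult in HH. nra. }
    pose proof (Rabs_pos p). nra. }
  assert (Ep : Rabs p ^ 2 = p ^ 2) by (unfold Rabs; destruct Rcase_abs; ring).
  nra.
Qed.

Lemma fsum_cs p x L : (fsum (fun k => p k * x k) L)^2 <=
  fsum (fun k => Rabs (p k)) L * fsum (fun k => Rabs (p k) * x k ^ 2) L.
Proof.
  induction L; simpl. lra.
  apply cs_step; auto.
  apply fsum_nonneg; intros; apply Rabs_pos.
  apply fsum_nonneg; intros; pose proof (Rabs_pos (p i)); pose proof (pow2_ge_0 (x i)); nra.
Qed.
Lemma Series_zero : Series (fun _ => 0) = 0.
Proof. rewrite (Series_ext _ (fun _ => 0 * 1)) by (intros; ring). rewrite Series_scal_l; ring. Qed.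

Lemma ex_zero : ex_series (fun _ : nat => 0).
Proof.
  apply ex_series_dom with (fun k => 0 * Rabs (/2) ^ k).
  intros; rewrite Rabs_R0; lra. apply ex_geom_scal; rewrite Rabs_pos_eq; lra.
Qed.

Lemma ex_fsum (F : nat -> nat -> R) L : (forall i, ex_series (F i)) -> ex_series (fun k => fsum (fun i => F i k) L).
Proof.
  intros H; induction L; simpl. apply ex_zero.
  apply (ex_series_plus (fun k => fsum (fun i => F i k) L) (fun k => F L k)); auto.
Qed.

Lemma fsum_Series (F : nat -> nat -> R) L : (forall i, ex_series (F i)) ->
  fsum (fun i => Series (F i)) L = Series (fun k => fsum (fun i => F i k) L).
Proof.
  intros H; induction L; simpl. rewrite Series_zero; auto.
  rewrite Series_plus; [rewrite IHL; auto| apply ex_fsum; auto | auto].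
Qed.

Lemma Rop_CS al sg f M n : Rabs al < 1 -> Bd f M ->
  ex_series (fun k => Rabs al ^ k * f (n + sg * Z.of_nat k)%Z ^ 2) /\
  (Rop al sg f n)^2 <= / (1 - Rabs al) * Series (fun k => Rabs al ^ k * f (n + sg * Z.of_nat k)%Z ^ 2).
Proof.
  intros Ha Hf.
  set (x := fun k => f (n + sg * Z.of_nat k)%Z).
  assert (Ex : ex_series (fun k => Rabs al ^ k * x k ^ 2)).
  { apply ex_series_dom with (fun k => M^2 * Rabs al ^ k); [|apply ex_geom_scal; auto].
    intros k. pose proof (Hf (n + sg * Z.of_nat k)%Z). fold (x k) in H.
    pose proof (pow_le (Rabs al) k (Rabs_pos al)).
    assert (x k ^ 2 <= M ^ 2). { pose proof (Rabs_pos (x k)). assert (Rabs (x k) ^ 2 = x k ^ 2) by (unfold Rabs; destruct Rcase_abs; ring). nra. }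
    rewrite Rabs_pos_eq by (pose proof (pow2_ge_0 (x k)); nra). nra. }
  split; auto.
  set (S2 := Series (fun k => Rabs al ^ k * x k ^ 2)).
  assert (Hg : Series (fun k => Rabs al ^ k) = / (1 - Rabs al)).
  { apply Series_geom. rewrite Rabs_Rabsolu; auto. }
  assert (Heg : ex_series (fun k => Rabs al ^ k)) by (apply ex_series_geom; rewrite Rabs_Rabsolu; auto).
  assert (Hb : forall m, (sum_n (fun k => al ^ k * x k) m)^2 <= / (1 - Rabs al) * S2).
  { intros m. rewrite sum_n_fsum.
    eapply Rle_trans; [apply fsum_cs|].
    assert (E1 : fsum (fun k => Rabs (al ^ k)) (S m) = fsum (fun k => Rabs al ^ k) (S m)).
    { apply fsum_ext; intros; symmetry; apply RPow_abs. }
    assert (E2 : fsum (fun k => Rabs (al ^ k) * x k ^ 2) (S m) = fsum (fun k => Rabs al ^ k * x k ^ 2) (S m)).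
    { apply fsum_ext; intros; rewrite RPow_abs; auto. }
    rewrite E1, E2.
    assert (N1 : forall k, 0 <= Rabs al ^ k) by (intros; apply pow_le, Rabs_pos).
    assert (N2 : forall k, 0 <= Rabs al ^ k * x k ^ 2) by (intros; pose proof (N1 k); pose proof (pow2_ge_0 (x k)); nra).
    pose proof (fsum_le_series _ N1 Heg (S m)) as Q1.
    pose proof (fsum_le_series _ N2 Ex (S m)) as Q2.
    pose proof (fsum_nonneg _ (S m) N1) as Q3. pose proof (fsum_nonneg _ (S m) N2) as Q4.
    apply Rmult_le_compat; auto. rewrite <- Hg; exact Q1. }
  assert (El : ex_series (fun k => al ^ k * x k)) by (eapply Rop_ex; eauto).
  assert (L := series_is_lim _ El).
  assert (L2 := is_lim_seq_mult' _ _ _ _ L L).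
  assert (Hb' : forall m, sum_n (fun k => al ^ k * x k) m * sum_n (fun k => al ^ k * x k) m <= / (1 - Rabs al) * S2).
  { intros m; eapply Rle_trans; [|apply (Hb m)]; right; simpl; rewrite Rmult_1_r; reflexivity. }
  assert (H := is_lim_seq_le _ (fun _ => / (1 - Rabs al) * S2) _ _ Hb' L2 (is_lim_seq_const _)).
  assert (H' : Series (fun k => al^k * x k) * Series (fun k => al^k * x k) <= / (1 - Rabs al) * S2) by exact H.
  unfold Rop. unfold x in H'. eapply Rle_trans; [|exact H']. right. ring.
Qed.
Lemma Rop_l2 al sg f : Rabs al < 1 -> l2 f ->
  l2 (Rop al sg f) /\ N (Rop al sg f) <= (/ (1 - Rabs al)) ^ 2 * N f.
Proof.
  intros Ha Hf. apply W_bound. intros a L.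
  set (Wa := / (1 - Rabs al)).
  assert (HWa : 0 < Wa) by (unfold Wa; apply Rinv_0_lt_compat; pose proof (Rabs_pos al); lra).
  pose proof (l2_Bd f Hf) as Hb.
  set (F := fun (i k : nat) => Rabs al ^ k * f (a + Z.of_nat i + sg * Z.of_nat k)%Z ^ 2).
  assert (EF : forall i, ex_series (F i)) by (intros i; exact (proj1 (Rop_CS al sg f _ _ Ha Hb))).
  apply Rle_trans with (fsum (fun i => Wa * Series (F i)) L).
  { unfold W, sq. apply fsum_le. intros i. exact (proj2 (Rop_CS al sg f _ (a + Z.of_nat i)%Z Ha Hb)). }
  rewrite fsum_scal, fsum_Series by auto.
  assert (Eg : Series (fun k => N f * Rabs al ^ k) = N f * Wa).
  { rewrite Series_scal_l. f_equal. apply Series_geom. rewrite Rabs_Rabsolu; auto. }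
  assert (Hle : Series (fun k => fsum (fun i => F i k) L) <= Series (fun k => N f * Rabs al ^ k)).
  { apply Series_le.
    - intros k. split.
      + apply fsum_nonneg; intros i; unfold F. pose proof (pow_le (Rabs al) k (Rabs_pos al)).
        pose proof (pow2_ge_0 (f (a + Z.of_nat i + sg * Z.of_nat k)%Z)). nra.
      + unfold F. rewrite fsum_scal.
        replace (fsum (fun i => f (a + Z.of_nat i + sg * Z.of_nat k)%Z ^ 2) L) with (W (sq f) (a + sg * Z.of_nat k)%Z L).
        * pose proof (W_le_N f Hf (a + sg * Z.of_nat k)%Z L). pose proof (pow_le (Rabs al) k (Rabs_pos al)). nra.
        * unfold W, sq; apply fsum_ext; intros; do 2 f_equal; lia.
    - apply (ex_series_scal_l (N f) (fun k => Rabs al ^ k)). apply ex_series_geom. rewrite Rabs_Rabsolu; auto. }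
  rewrite Eg in Hle. pose proof (N_nonneg f Hf). nra.
Qed.
Definition Conv (al kap : R) (f : Z -> R) : Z -> R :=
  fun n => kap * Rop al (-1) f n + (kap * al) * Rop al 1 f (n + 1)%Z.

Definition KC al kap := (2 * kap ^ 2 + 2 * (kap * al) ^ 2) * (/ (1 - Rabs al)) ^ 2.

Lemma KC_nonneg al kap : 0 <= KC al kap.
Proof. unfold KC. pose proof (pow2_ge_0 kap); pose proof (pow2_ge_0 (kap*al)); pose proof (pow2_ge_0 (/ (1 - Rabs al))). nra. Qed.

Lemma Conv_l2 al kap f : Rabs al < 1 -> l2 f -> l2 (Conv al kap f) /\ N (Conv al kap f) <= KC al kap * N f.
Proof.
  intros Ha Hf.
  destruct (Rop_l2 al (-1) f Ha Hf) as [L1 N1].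
  destruct (Rop_l2 al 1 f Ha Hf) as [L2 N2].
  destruct (l2_shift _ 1 L2) as [L3 N3].
  destruct (l2_comb _ _ kap (kap * al) L1 L3) as [L4 N4].
  split; [exact L4|]. eapply Rle_trans; [exact N4|]. unfold KC.
  pose proof (pow2_ge_0 kap); pose proof (pow2_ge_0 (kap*al)).
  assert (2 * kap ^ 2 * N (Rop al (-1) f) <= 2 * kap ^ 2 * ((/ (1 - Rabs al)) ^ 2 * N f)) by (apply Rmult_le_compat_l; lra).
  assert (2 * (kap * al) ^ 2 * N (fun n => Rop al 1 f (n + 1)%Z) <= 2 * (kap*al) ^ 2 * ((/ (1 - Rabs al)) ^ 2 * N f)) by (apply Rmult_le_compat_l; lra).
  lra.
Qed.

Lemma Conv_lin al kap f g a b M1 M2 n : Rabs al < 1 -> Bd f M1 -> Bd g M2 ->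
  Conv al kap (fun m => a * f m + b * g m) n = a * Conv al kap f n + b * Conv al kap g n.
Proof.
  intros Ha Hf Hg. unfold Conv. rewrite !(Rop_lin al _ f g a b M1 M2) by auto. ring.
Qed.

Lemma Conv_shift al kap f d n : Conv al kap (fun m => f (m + d)%Z) n = Conv al kap f (n + d)%Z.
Proof.
  unfold Conv. rewrite !Rop_shift. replace (n + 1 + d)%Z with (n + d + 1)%Z by lia. reflexivity.
Qed.

Lemma Conv_P al kap c f M n : Rabs al < 1 -> Bd f M -> kap * c * (1 - al ^ 2) = 1 ->
  c * (1 + al ^ 2) * Conv al kap f n + (- c * al) * (Conv al kap f (n + 1)%Z + Conv al kap f (n - 1)%Z) = f n.
Proof.
  intros Ha Hf Hk. unfold Conv.
  pose proof (Rop_rec al (-1) f M n Ha Hf) as R1.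
  pose proof (Rop_rec al (-1) f M (n + 1) Ha Hf) as R2.
  pose proof (Rop_rec al 1 f M n Ha Hf) as R3.
  pose proof (Rop_rec al 1 f M (n + 1) Ha Hf) as R4.
  replace (n + 1 + -1)%Z with n in R2 by lia.
  replace (n + 1 + 1)%Z with (n + 1 + 1)%Z in R4 by lia.
  replace (n + -1)%Z with (n - 1)%Z in R1 by lia.
  replace (n - 1 + 1)%Z with n by lia.
  rewrite R2, R3, R1, R4.
  transitivity (kap * c * (1 - al ^ 2) * f n); [ring| rewrite Hk; ring].
Qed.
Definition ar (p : Z -> C2) (n : Z) : R := fst (fst (p n)).
Definition ai (p : Z -> C2) (n : Z) : R := snd (fst (p n)).
Definition br (p : Z -> C2) (n : Z) : R := fst (snd (p n)).
Definition bi (p : Z -> C2) (n : Z) : R := snd (snd (p n)).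
Definition mk (a1 a2 b1 b2 : Z -> R) : Z -> C2 := fun n => ((a1 n, a2 n), (b1 n, b2 n)).

Lemma C2_ext (x y : C2) : fst (fst x) = fst (fst y) -> snd (fst x) = snd (fst y) ->
  fst (snd x) = fst (snd y) -> snd (snd x) = snd (snd y) -> x = y.
Proof. destruct x as [[x1 x2] [x3 x4]]; destruct y as [[y1 y2] [y3 y4]]; simpl; intros; subst; auto. Qed.

Lemma C2norm2_eq x : C2norm2 x = fst (fst x) ^ 2 + snd (fst x) ^ 2 + (fst (snd x) ^ 2 + snd (snd x) ^ 2).
Proof. unfold C2norm2. rewrite !Cmod2_alt. unfold Re, Im. ring. Qed.

Lemma H_comp s t lam (p : Z -> C2) n :
  let q := C2add (H_bulk (A_SSH t) (V_SSH s) p n) (C2scal (Copp (RtoC lam)) (p n)) in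
  fst (fst q) = t * br p (n - 1) + s * br p n - lam * ar p n /\
  snd (fst q) = t * bi p (n - 1) + s * bi p n - lam * ai p n /\
  fst (snd q) = t * ar p (n + 1) + s * ar p n - lam * br p n /\
  snd (snd q) = t * ai p (n + 1) + s * ai p n - lam * bi p n.
Proof.
  unfold ar, ai, br, bi, H_bulk, C2add, C2scal, mv, madj, A_SSH, V_SSH, rscal, sigma1.
  destruct (p (n - 1)%Z) as [[x1 x2] [x3 x4]]. destruct (p (n + 1)%Z) as [[y1 y2] [y3 y4]].
  destruct (p n) as [[z1 z2] [z3 z4]]. simpl. repeat split; ring.
Qed.
Lemma mk_eta p : p = mk (ar p) (ai p) (br p) (bi p).
Proof. apply functional_extensionality; intros n; apply C2_ext; reflexivity. Qed.

Lemma sq_le_4 a b c d : 0 <= a ^ 2 <= a ^ 2 + b ^ 2 + (c ^ 2 + d ^ 2) /\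
  0 <= b ^ 2 <= a ^ 2 + b ^ 2 + (c ^ 2 + d ^ 2) /\
  0 <= c ^ 2 <= a ^ 2 + b ^ 2 + (c ^ 2 + d ^ 2) /\ 0 <= d ^ 2 <= a ^ 2 + b ^ 2 + (c ^ 2 + d ^ 2).
Proof. pose proof (pow2_ge_0 a); pose proof (pow2_ge_0 b); pose proof (pow2_ge_0 c); pose proof (pow2_ge_0 d). lra. Qed.

Lemma ex_le_nonneg (a b : nat -> R) : (forall k, 0 <= a k <= b k) -> ex_series b -> ex_series a.
Proof. intros H Hb; apply ex_series_dom with b; auto. intros k; specialize (H k); rewrite Rabs_pos_eq; lra. Qed.

Lemma ex_comp4 (g : nat -> C2) : ex_series (fun k => C2norm2 (g k)) ->
  ex_series (fun k => fst (fst (g k)) ^ 2) /\ ex_series (fun k => snd (fst (g k)) ^ 2) /\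
  ex_series (fun k => fst (snd (g k)) ^ 2) /\ ex_series (fun k => snd (snd (g k)) ^ 2).
Proof.
  intros H. split; [|split; [|split]];
  (apply ex_le_nonneg with (b := fun k => C2norm2 (g k)); [|exact H]; intros k; rewrite C2norm2_eq;
   pose proof (sq_le_4 (fst (fst (g k))) (snd (fst (g k))) (fst (snd (g k))) (snd (snd (g k)))); tauto).
Qed.

Lemma l2Z_comp p : is_l2_Z p -> l2 (ar p) /\ l2 (ai p) /\ l2 (br p) /\ l2 (bi p).
Proof.
  intros [H1 H2]. apply ex_comp4 in H1; apply ex_comp4 in H2. unfold l2, ar, ai, br, bi. tauto.
Qed.

Lemma ex_plus (a b : nat -> R) : ex_series a -> ex_series b -> ex_series (fun k => a k + b k).
Proof. intros; exact (ex_series_plus a b H H0). Qed.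

Lemma Series4 (a b c d : nat -> R) : ex_series a -> ex_series b -> ex_series c -> ex_series d ->
  ex_series (fun k => a k + b k + (c k + d k)) /\
  Series (fun k => a k + b k + (c k + d k)) = Series a + Series b + (Series c + Series d).
Proof.
  intros Ha Hb Hc Hd. split.
  - apply (ex_plus (fun k => a k + b k) (fun k => c k + d k)); apply ex_plus; auto.
  - rewrite (Series_plus (fun k => a k + b k) (fun k => c k + d k)) by (apply ex_plus; auto).
    rewrite !Series_plus; auto.
Qed.

Lemma l2Z_mk a1 a2 b1 b2 : l2 a1 -> l2 a2 -> l2 b1 -> l2 b2 ->
  is_l2_Z (mk a1 a2 b1 b2) /\ norm2_Z (mk a1 a2 b1 b2) = N a1 + N a2 + N b1 + N b2.
Proof.
  intros [A1 A1'] [A2 A2'] [B1 B1'] [B2 B2'].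
  assert (E : forall n, C2norm2 (mk a1 a2 b1 b2 n) = a1 n ^ 2 + a2 n ^ 2 + (b1 n ^ 2 + b2 n ^ 2)).
  { intros n; rewrite C2norm2_eq; reflexivity. }
  destruct (Series4 _ _ _ _ A1 A2 B1 B2) as [X1 Y1].
  destruct (Series4 _ _ _ _ A1' A2' B1' B2') as [X2 Y2].
  unfold is_l2_Z, norm2_Z, N.
  rewrite (Series_ext (fun k => C2norm2 (mk a1 a2 b1 b2 (Z.of_nat k))) _ (fun k => E _)).
  rewrite (Series_ext (fun k => C2norm2 (mk a1 a2 b1 b2 (- Z.of_nat (S k))%Z)) _ (fun k => E _)).
  rewrite Y1, Y2. split; [split|ring].
  - eapply ex_series_ext; [intros; symmetry; apply E|exact X1].
  - eapply ex_series_ext; [intros; symmetry; apply E|exact X2].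
Qed.
Lemma params s t lam : Rabs s <> Rabs t -> Rabs lam < Rabs (Rabs s - Rabs t) ->
  let B := s ^ 2 + t ^ 2 - lam ^ 2 in
  let c := (B + sqrt (B ^ 2 - 4 * (s * t) ^ 2)) / 2 in
  let al := - (s * t) / c in
  0 < c /\ Rabs al < 1 /\ c * (1 + al ^ 2) = B /\ - c * al = s * t /\ 1 - al ^ 2 <> 0.
Proof.
  intros Hst Hl B c al.
  assert (Hst2 : 2 * Rabs (s * t) < B).
  { unfold B. rewrite Rabs_mult.
    assert (lam ^ 2 < (Rabs s - Rabs t) ^ 2).
    { assert (Rabs lam ^ 2 = lam ^ 2) by (unfold Rabs; destruct Rcase_abs; ring).
      assert (Rabs (Rabs s - Rabs t) ^ 2 = (Rabs s - Rabs t) ^ 2) by (unfold Rabs at 1; destruct Rcase_abs; ring).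
      pose proof (Rabs_pos lam). nra. }
    assert (Rabs s ^ 2 = s ^ 2) by (unfold Rabs; destruct Rcase_abs; ring).
    assert (Rabs t ^ 2 = t ^ 2) by (unfold Rabs; destruct Rcase_abs; ring). nra. }
  assert (Hp : 0 <= Rabs (s * t)) by apply Rabs_pos.
  assert (Est : Rabs (s * t) ^ 2 = (s * t) ^ 2) by (unfold Rabs; destruct Rcase_abs; ring).
  set (D := B ^ 2 - 4 * (s * t) ^ 2).
  assert (HD : 0 < D) by (unfold D; nra).
  assert (Hs : sqrt D * sqrt D = D) by (apply sqrt_sqrt; lra).
  assert (Hs0 : 0 < sqrt D) by (apply sqrt_lt_R0; lra).
  assert (Hc : 0 < c) by (unfold c; fold D; lra).
  assert (Hcst : Rabs (s * t) < c) by (unfold c; fold D; lra).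
  assert (Hal : Rabs al < 1).
  { unfold al. unfold Rdiv. rewrite Rabs_mult, Rabs_Ropp, Rabs_inv, (Rabs_pos_eq c) by lra.
    apply (Rmult_lt_reg_r c); [lra|]. field_simplify; lra. }
  assert (Hcc : c * c - B * c + (s * t) ^ 2 = 0).
  { unfold c. fold D. transitivity ((sqrt D * sqrt D - D) / 4); [unfold D; field | rewrite Hs; field]. }
  repeat split; auto.
  - unfold al. field_simplify; [|lra]. apply (Rmult_eq_reg_r c); [|lra]. field_simplify; [|lra]. nra.
  - unfold al. field. lra.
  - assert (al ^ 2 < 1).
    { assert (Rabs al ^ 2 = al ^ 2) by (unfold Rabs; destruct Rcase_abs; ring). pose proof (Rabs_pos al). nra. }
    lra.
Qed.
Lemma Bd_shift y M d : Bd y M -> Bd (fun m => y (m + d)%Z) M.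
Proof. intros H n; apply H. Qed.

Lemma Bd_comb f g a b M1 M2 : Bd f M1 -> Bd g M2 -> Bd (fun m => a * f m + b * g m) (Rabs a * M1 + Rabs b * M2).
Proof.
  intros H1 H2 n. eapply Rle_trans; [apply Rabs_triang|]. rewrite !Rabs_mult.
  pose proof (Rabs_pos a); pose proof (Rabs_pos b). specialize (H1 n); specialize (H2 n).
  apply Rplus_le_compat; apply Rmult_le_compat_l; auto.
Qed.

Lemma Conv_comb al kap x y a b e d Mx My n : Rabs al < 1 -> Bd x Mx -> Bd y My ->
  Conv al kap (fun m => a * y (m + d)%Z + b * y m + e * x m) n =
  a * Conv al kap y (n + d)%Z + b * Conv al kap y n + e * Conv al kap x n.
Proof.
  intros Ha Hx Hy.
  rewrite (functional_extensionality (fun m => a * y (m + d)%Z + b * y m + e * x m)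
            (fun m => 1 * (fun m => a * y (m + d)%Z + b * y m) m + e * x m)) by (intros; simpl; ring).
  rewrite (Conv_lin al kap _ x 1 e _ Mx n Ha (Bd_comb _ _ a b My My (Bd_shift y My d Hy) Hy) Hx).
  rewrite (Conv_lin al kap _ y a b My My n Ha (Bd_shift y My d Hy) Hy).
  rewrite Conv_shift. ring.
Qed.

Lemma comp_bound al kap s t lam x y d (F : Z -> R) : Rabs al < 1 -> l2 x -> l2 y ->
  (forall n, F n = t * Conv al kap y (n + d)%Z + s * Conv al kap y n + lam * Conv al kap x n) ->
  l2 F /\ N F <= (4 * t ^ 2 + 4 * s ^ 2) * KC al kap * N y + 2 * lam ^ 2 * KC al kap * N x.
Proof.
  intros Ha Hx Hy HF.
  destruct (Conv_l2 al kap x Ha Hx) as [Lx Nx].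
  destruct (Conv_l2 al kap y Ha Hy) as [Ly Ny].
  destruct (l2_shift _ d Ly) as [Ls Ns].
  destruct (l2_comb _ _ t s Ls Ly) as [L1 N1].
  destruct (l2_comb _ _ 1 lam L1 Lx) as [L2 N2].
  assert (E : F = (fun n => 1 * (fun n => t * Conv al kap y (n + d)%Z + s * Conv al kap y n) n + lam * Conv al kap x n)).
  { apply functional_extensionality; intros n; rewrite HF; ring. }
  rewrite E. split; auto. eapply Rle_trans; [exact N2|].
  pose proof (pow2_ge_0 t); pose proof (pow2_ge_0 s); pose proof (pow2_ge_0 lam).
  pose proof (KC_nonneg al kap). pose proof (N_nonneg _ Hy). pose proof (N_nonneg _ Hx).
  assert (2 * t ^ 2 * N (fun n => Conv al kap y (n + d)%Z) <= 2 * t ^ 2 * (KC al kap * N y)) by (apply Rmult_le_compat_l; lra).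
  assert (2 * s ^ 2 * N (Conv al kap y) <= 2 * s ^ 2 * (KC al kap * N y)) by (apply Rmult_le_compat_l; lra).
  assert (2 * lam ^ 2 * N (Conv al kap x) <= 2 * lam ^ 2 * (KC al kap * N x)) by (apply Rmult_le_compat_l; lra).
  nra.
Qed.

Definition Gop (s t lam al kap : R) (phi : Z -> C2) : Z -> C2 :=
  let X1 := Conv al kap (ar phi) in let X2 := Conv al kap (ai phi) in
  let Y1 := Conv al kap (br phi) in let Y2 := Conv al kap (bi phi) in
  mk (fun n => t * Y1 (n - 1)%Z + s * Y1 n + lam * X1 n)
     (fun n => t * Y2 (n - 1)%Z + s * Y2 n + lam * X2 n)
     (fun n => t * X1 (n + 1)%Z + s * X1 n + lam * Y1 n)
     (fun n => t * X2 (n + 1)%Z + s * X2 n + lam * Y2 n).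

Lemma bulk_resolvent s t lam : Rabs s <> Rabs t -> Rabs lam < Rabs (Rabs s - Rabs t) ->
  in_resolvent_Z (H_bulk (A_SSH t) (V_SSH s)) (RtoC lam).
Proof.
  intros Hst Hl.
  destruct (params s t lam Hst Hl) as (Hc & Ha & HB & Hst' & Hal).
  set (B := s ^ 2 + t ^ 2 - lam ^ 2) in *.
  set (c := (B + sqrt (B ^ 2 - 4 * (s * t) ^ 2)) / 2) in *.
  set (al := - (s * t) / c) in *.
  set (kap := / (c * (1 - al ^ 2))).
  assert (Hk : kap * c * (1 - al ^ 2) = 1) by (unfold kap; field; split; lra).
  assert (PX : forall x M n, Bd x M -> B * Conv al kap x n + s * t * (Conv al kap x (n + 1)%Z + Conv al kap x (n - 1)%Z) = x n).
  { intros x M n Hx. rewrite <- HB, <- Hst'. apply (Conv_P al kap c x M n Ha Hx Hk). }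
  exists (Gop s t lam al kap). split; [|split; [|split]].
  - intros phi Hphi. destruct (l2Z_comp phi Hphi) as (L1 & L2 & L3 & L4).
    destruct (comp_bound al kap s t lam (ar phi) (br phi) (-1) (fun n => t * Conv al kap (br phi) (n - 1)%Z + s * Conv al kap (br phi) n + lam * Conv al kap (ar phi) n) Ha L1 L3 (fun n => eq_refl)) as [M1 _].
    destruct (comp_bound al kap s t lam (ai phi) (bi phi) (-1) (fun n => t * Conv al kap (bi phi) (n - 1)%Z + s * Conv al kap (bi phi) n + lam * Conv al kap (ai phi) n) Ha L2 L4 (fun n => eq_refl)) as [M2 _].
    destruct (comp_bound al kap s t lam (br phi) (ar phi) 1 (fun n => t * Conv al kap (ar phi) (n + 1)%Z + s * Conv al kap (ar phi) n + lam * Conv al kap (br phi) n) Ha L3 L1 (fun n => eq_refl)) as [M3 _].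
    destruct (comp_bound al kap s t lam (bi phi) (ai phi) 1 (fun n => t * Conv al kap (ai phi) (n + 1)%Z + s * Conv al kap (ai phi) n + lam * Conv al kap (bi phi) n) Ha L4 L2 (fun n => eq_refl)) as [M4 _].
    exact (proj1 (l2Z_mk _ _ _ _ M1 M2 M3 M4)).
  - intros phi Hphi. destruct (l2Z_comp phi Hphi) as (L1 & L2 & L3 & L4).
    set (G := Gop s t lam al kap phi).
    assert (Ga : forall m, ar G m = t * Conv al kap (br phi) (m - 1)%Z + s * Conv al kap (br phi) m + lam * Conv al kap (ar phi) m) by reflexivity.
    assert (Gai : forall m, ai G m = t * Conv al kap (bi phi) (m - 1)%Z + s * Conv al kap (bi phi) m + lam * Conv al kap (ai phi) m) by reflexivity.
    assert (Gb : forall m, br G m = t * Conv al kap (ar phi) (m + 1)%Z + s * Conv al kap (ar phi) m + lam * Conv al kap (br phi) m) by reflexivity.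
    assert (Gbi : forall m, bi G m = t * Conv al kap (ai phi) (m + 1)%Z + s * Conv al kap (ai phi) m + lam * Conv al kap (bi phi) m) by reflexivity.
    apply functional_extensionality; intros n.
    destruct (H_comp s t lam G n) as (E1 & E2 & E3 & E4).
    apply C2_ext; [rewrite E1 | rewrite E2 | rewrite E3 | rewrite E4];
    rewrite ?Ga, ?Gai, ?Gb, ?Gbi; try replace (n - 1 + 1)%Z with n by lia; try replace (n + 1 - 1)%Z with n by lia.
    + change (fst (fst (phi n))) with (ar phi n). rewrite <- (PX (ar phi) _ n (l2_Bd _ L1)). unfold B; ring.
    + change (snd (fst (phi n))) with (ai phi n). rewrite <- (PX (ai phi) _ n (l2_Bd _ L2)). unfold B; ring.
    + change (fst (snd (phi n))) with (br phi n). rewrite <- (PX (br phi) _ n (l2_Bd _ L3)). unfold B; ring.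
    + change (snd (snd (phi n))) with (bi phi n). rewrite <- (PX (bi phi) _ n (l2_Bd _ L4)). unfold B; ring.
  - intros psi Hpsi. destruct (l2Z_comp psi Hpsi) as (L1 & L2 & L3 & L4).
    set (q := fun n => C2add (H_bulk (A_SSH t) (V_SSH s) psi n) (C2scal (Copp (RtoC lam)) (psi n))).
    assert (Aq : ar q = fun m => t * br psi (m + -1)%Z + s * br psi m + (- lam) * ar psi m).
    { apply functional_extensionality; intros m. destruct (H_comp s t lam psi m) as (E1 & _ & _ & _).
      unfold ar at 1; unfold q; rewrite E1. replace (m + -1)%Z with (m - 1)%Z by lia. ring. }
    assert (Aiq : ai q = fun m => t * bi psi (m + -1)%Z + s * bi psi m + (- lam) * ai psi m).
    { apply functional_extensionality; intros m. destruct (H_comp s t lam psi m) as (_ & E1 & _ & _).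
      unfold ai at 1; unfold q; rewrite E1. replace (m + -1)%Z with (m - 1)%Z by lia. ring. }
    assert (Bq : br q = fun m => t * ar psi (m + 1)%Z + s * ar psi m + (- lam) * br psi m).
    { apply functional_extensionality; intros m. destruct (H_comp s t lam psi m) as (_ & _ & E1 & _).
      unfold br at 1; unfold q; rewrite E1. ring. }
    assert (Biq : bi q = fun m => t * ai psi (m + 1)%Z + s * ai psi m + (- lam) * bi psi m).
    { apply functional_extensionality; intros m. destruct (H_comp s t lam psi m) as (_ & _ & _ & E1).
      unfold bi at 1; unfold q; rewrite E1. ring. }
    pose proof (l2_Bd _ L1) as D1. pose proof (l2_Bd _ L2) as D2.
    pose proof (l2_Bd _ L3) as D3. pose proof (l2_Bd _ L4) as D4.
    assert (CA : forall m, Conv al kap (ar q) m = t * Conv al kap (br psi) (m - 1)%Z + s * Conv al kap (br psi) m + (- lam) * Conv al kap (ar psi) m).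
    { intros m. rewrite Aq, (Conv_comb al kap _ _ _ _ _ _ _ _ m Ha D1 D3). replace (m + -1)%Z with (m - 1)%Z by lia. ring. }
    assert (CAi : forall m, Conv al kap (ai q) m = t * Conv al kap (bi psi) (m - 1)%Z + s * Conv al kap (bi psi) m + (- lam) * Conv al kap (ai psi) m).
    { intros m. rewrite Aiq, (Conv_comb al kap _ _ _ _ _ _ _ _ m Ha D2 D4). replace (m + -1)%Z with (m - 1)%Z by lia. ring. }
    assert (CB : forall m, Conv al kap (br q) m = t * Conv al kap (ar psi) (m + 1)%Z + s * Conv al kap (ar psi) m + (- lam) * Conv al kap (br psi) m).
    { intros m. rewrite Bq, (Conv_comb al kap _ _ _ _ _ _ _ _ m Ha D3 D1). ring. }
    assert (CBi : forall m, Conv al kap (bi q) m = t * Conv al kap (ai psi) (m + 1)%Z + s * Conv al kap (ai psi) m + (- lam) * Conv al kap (bi psi) m).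
    { intros m. rewrite Biq, (Conv_comb al kap _ _ _ _ _ _ _ _ m Ha D4 D2). ring. }
    apply functional_extensionality; intros n.
    apply C2_ext.
    + change (t * Conv al kap (br q) (n - 1)%Z + s * Conv al kap (br q) n + lam * Conv al kap (ar q) n = ar psi n).
      rewrite CA, !CB. replace (n - 1 + 1)%Z with n by lia.
      rewrite <- (PX (ar psi) _ n D1). unfold B; ring.
    + change (t * Conv al kap (bi q) (n - 1)%Z + s * Conv al kap (bi q) n + lam * Conv al kap (ai q) n = ai psi n).
      rewrite CAi, !CBi. replace (n - 1 + 1)%Z with n by lia.
      rewrite <- (PX (ai psi) _ n D2). unfold B; ring.
    + change (t * Conv al kap (ar q) (n + 1)%Z + s * Conv al kap (ar q) n + lam * Conv al kap (br q) n = br psi n).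
      rewrite CB, !CA. replace (n + 1 - 1)%Z with n by lia.
      rewrite <- (PX (br psi) _ n D3). unfold B; ring.
    + change (t * Conv al kap (ai q) (n + 1)%Z + s * Conv al kap (ai q) n + lam * Conv al kap (bi q) n = bi psi n).
      rewrite CBi, !CAi. replace (n + 1 - 1)%Z with n by lia.
      rewrite <- (PX (bi psi) _ n D4). unfold B; ring.
  - exists ((4 * t ^ 2 + 4 * s ^ 2 + 2 * lam ^ 2) * KC al kap).
    intros phi Hphi. destruct (l2Z_comp phi Hphi) as (L1 & L2 & L3 & L4).
    destruct (comp_bound al kap s t lam (ar phi) (br phi) (-1) (fun n => t * Conv al kap (br phi) (n - 1)%Z + s * Conv al kap (br phi) n + lam * Conv al kap (ar phi) n) Ha L1 L3 (fun n => eq_refl)) as [M1 N1].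
    destruct (comp_bound al kap s t lam (ai phi) (bi phi) (-1) (fun n => t * Conv al kap (bi phi) (n - 1)%Z + s * Conv al kap (bi phi) n + lam * Conv al kap (ai phi) n) Ha L2 L4 (fun n => eq_refl)) as [M2 N2].
    destruct (comp_bound al kap s t lam (br phi) (ar phi) 1 (fun n => t * Conv al kap (ar phi) (n + 1)%Z + s * Conv al kap (ar phi) n + lam * Conv al kap (br phi) n) Ha L3 L1 (fun n => eq_refl)) as [M3 N3].
    destruct (comp_bound al kap s t lam (bi phi) (ai phi) 1 (fun n => t * Conv al kap (ai phi) (n + 1)%Z + s * Conv al kap (ai phi) n + lam * Conv al kap (bi phi) n) Ha L4 L2 (fun n => eq_refl)) as [M4 N4].
    pose proof (proj2 (l2Z_mk _ _ _ _ M1 M2 M3 M4)) as E1.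
    pose proof (proj2 (l2Z_mk _ _ _ _ L1 L2 L3 L4)) as E2. rewrite <- mk_eta in E2.
    match type of E1 with _ = ?r => assert (E3 : norm2_Z (Gop s t lam al kap phi) = r) by exact E1 end.
    rewrite E3, E2. lra.
Qed.
Lemma conjR x : Cconj (RtoC x) = RtoC x.
Proof. unfold Cconj, RtoC; simpl. f_equal; ring. Qed.

Section Dummy. End Dummy.

Lemma HL0 s t uL uR psi : psiL (H_SSH s t uL uR psi) 0 =
 (Cplus (Cmult (RtoC t) (snd (psiL psi 1))) (Cmult (RtoC s) (snd (psiL psi 0))),
  Cplus (Cmult (RtoC uL) (psi0 psi)) (Cmult (RtoC s) (fst (psiL psi 0)))).
Proof.
  unfold H_SSH, H_int, C2add, mv, madj, A_SSH, V_SSH, rscal, sigma1, row_adj_act, row_act; cbn [psiL psi0 psiR m11 m12 m21 m22 fst snd].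
  rewrite !conjR. f_equal; ring.
Qed.

Lemma HLS s t uL uR psi k : psiL (H_SSH s t uL uR psi) (S k) =
 (Cplus (Cmult (RtoC t) (snd (psiL psi (S (S k))))) (Cmult (RtoC s) (snd (psiL psi (S k)))),
  Cplus (Cmult (RtoC t) (fst (psiL psi k))) (Cmult (RtoC s) (fst (psiL psi (S k))))).
Proof.
  unfold H_SSH, H_int, C2add, mv, madj, A_SSH, V_SSH, rscal, sigma1, row_adj_act, row_act; cbn [psiL psi0 psiR m11 m12 m21 m22 fst snd].
  rewrite !conjR. f_equal; ring.
Qed.

Lemma H00 s t uL uR psi : psi0 (H_SSH s t uL uR psi) =
  Cplus (Cmult (RtoC uL) (snd (psiL psi 0))) (Cmult (RtoC uR) (fst (psiR psi 0))).
Proof.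
  unfold H_SSH, H_int, C2add, mv, madj, A_SSH, V_SSH, rscal, sigma1, row_adj_act, row_act; cbn [psiL psi0 psiR m11 m12 m21 m22 fst snd].
  ring.
Qed.

Lemma HR0 s t uL uR psi : psiR (H_SSH s t uL uR psi) 0 =
 (Cplus (Cmult (RtoC uR) (psi0 psi)) (Cmult (RtoC s) (snd (psiR psi 0))),
  Cplus (Cmult (RtoC t) (fst (psiR psi 1))) (Cmult (RtoC s) (fst (psiR psi 0)))).
Proof.
  unfold H_SSH, H_int, C2add, mv, madj, A_SSH, V_SSH, rscal, sigma1, row_adj_act, row_act; cbn [psiL psi0 psiR m11 m12 m21 m22 fst snd].
  rewrite !conjR. f_equal; ring.
Qed.

Lemma HRS s t uL uR psi k : psiR (H_SSH s t uL uR psi) (S k) =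
 (Cplus (Cmult (RtoC t) (snd (psiR psi k))) (Cmult (RtoC s) (snd (psiR psi (S k)))),
  Cplus (Cmult (RtoC t) (fst (psiR psi (S (S k))))) (Cmult (RtoC s) (fst (psiR psi (S k))))).
Proof.
  unfold H_SSH, H_int, C2add, mv, madj, A_SSH, V_SSH, rscal, sigma1, row_adj_act, row_act; cbn [psiL psi0 psiR m11 m12 m21 m22 fst snd].
  rewrite !conjR. f_equal; ring.
Qed.
Lemma St_eq x y : (forall k, psiL x k = psiL y k) -> psi0 x = psi0 y -> (forall k, psiR x k = psiR y k) -> x = y.
Proof. destruct x, y; simpl; intros; f_equal; auto; apply functional_extensionality; auto. Qed.

Lemma pair_eq0 (x y : C) : (x, y) = C2zero -> x = RtoC 0 /\ y = RtoC 0.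
Proof. unfold C2zero; intros H; inversion H; auto. Qed.

Lemma RtoC_neq p : p <> 0 -> RtoC p <> RtoC 0.
Proof. intros H E; apply H; injection E; auto. Qed.

Lemma solve_rec p q x y : p <> 0 -> Cplus (Cmult (RtoC p) y) (Cmult (RtoC q) x) = RtoC 0 ->
  y = Cmult (RtoC (- q / p)) x.
Proof.
  intros Hp E. pose proof (RtoC_neq p Hp) as Hp'.
  rewrite RtoC_div by auto. rewrite RtoC_opp.
  assert (E2 : Cmult (RtoC p) y = Copp (Cmult (RtoC q) x)).
  { rewrite <- (Cplus_0_l (Copp _)). rewrite <- E. ring. }
  transitivity (Cmult (Cinv (RtoC p)) (Cmult (RtoC p) y)); [field; auto|].
  rewrite E2. field; auto.
Qed.

Lemma grow p q x y : Rabs q <= Rabs p -> p <> 0 -> Cplus (Cmult (RtoC q) y) (Cmult (RtoC p) x) = RtoC 0 ->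
  Cmod x <= Cmod y.
Proof.
  intros Hqp Hp E.
  assert (E2 : Cmult (RtoC p) x = Copp (Cmult (RtoC q) y)).
  { rewrite <- (Cplus_0_l (Copp _)). rewrite <- E. ring. }
  assert (E3 : Rabs p * Cmod x = Rabs q * Cmod y).
  { rewrite <- !Cmod_R, <- !Cmod_mult, E2, Cmod_opp. reflexivity. }
  pose proof (Cmod_ge_0 x); pose proof (Cmod_ge_0 y).
  assert (0 < Rabs p) by (apply Rabs_pos_lt; auto).
  apply (Rmult_le_reg_l (Rabs p)); auto. rewrite E3. apply Rmult_le_compat_r; auto.
Qed.

Lemma geom_rec (z : nat -> C) r : (forall k, z (S k) = Cmult (RtoC r) (z k)) ->
  forall k, z k = Cmult (z 0%nat) (RtoC (r ^ k)).
Proof.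
  intros H k; induction k.
  - simpl. rewrite Cmult_1_r. reflexivity.
  - rewrite H, IHk. simpl pow. rewrite RtoC_mult. ring.
Qed.

Lemma nondec_zero (z : nat -> C) : (forall k, Cmod (z k) <= Cmod (z (S k))) ->
  ex_series (fun k => Cmod (z k) ^ 2) -> forall k, z k = RtoC 0.
Proof.
  intros Hm He j.
  assert (Hl := ex_series_lim_0 _ He).
  assert (Hmj : forall m, Cmod (z j) ^ 2 <= Cmod (z (m + j)%nat) ^ 2).
  { intros m; induction m; simpl; [lra|].
    pose proof (Hm (m + j)%nat). pose proof (Cmod_ge_0 (z j)). pose proof (Cmod_ge_0 (z (m+j)%nat)). nra. }
  apply (is_lim_seq_incr_n _ j) in Hl.
  assert (H := is_lim_seq_le (fun _ => Cmod (z j) ^ 2) _ _ _ Hmj (is_lim_seq_const _) Hl).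
  simpl in H. apply Cmod_eq_0. pose proof (Cmod_ge_0 (z j)). nra.
Qed.

Lemma l2_fst (f : nat -> C2) : is_l2_nat f -> ex_series (fun k => Cmod (fst (f k)) ^ 2).
Proof.
  intros H. apply ex_le_nonneg with (b := fun k => C2norm2 (f k)); auto.
  intros k; unfold C2norm2. pose proof (pow2_ge_0 (Cmod (fst (f k)))); pose proof (pow2_ge_0 (Cmod (snd (f k)))); lra.
Qed.

Lemma l2_snd (f : nat -> C2) : is_l2_nat f -> ex_series (fun k => Cmod (snd (f k)) ^ 2).
Proof.
  intros H. apply ex_le_nonneg with (b := fun k => C2norm2 (f k)); auto.
  intros k; unfold C2norm2. pose proof (pow2_ge_0 (Cmod (fst (f k)))); pose proof (pow2_ge_0 (Cmod (snd (f k)))); lra.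
Qed.

Lemma ex_ext_R (a b : nat -> R) : (forall n, a n = b n) -> ex_series a -> ex_series b.
Proof. intros; eapply ex_series_ext; eauto. Qed.

Lemma l2_geomC a b r : Rabs r < 1 -> is_l2_nat (fun k => (RtoC (a * r ^ k), RtoC (b * r ^ k))).
Proof.
  intros Hr. unfold is_l2_nat.
  apply ex_ext_R with (fun k => (a ^ 2 + b ^ 2) * (r ^ 2) ^ k).
  { intros k. rewrite C2norm2_eq. simpl fst; simpl snd. rewrite <- pow_mult, Nat.mul_comm, pow_mult. ring. }
  apply (ex_series_scal_l (a ^ 2 + b ^ 2) (fun k => (r ^ 2) ^ k)). apply ex_series_geom.
  rewrite <- RPow_abs. assert (Rabs r ^ 2 < 1). { pose proof (Rabs_pos r). nra. } auto.
Qed.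
Definition KEQ (s t uL uR : R) (psi : St) : Prop :=
 (forall k, Cplus (Cmult (RtoC t) (snd (psiL psi (S k)))) (Cmult (RtoC s) (snd (psiL psi k))) = RtoC 0) /\
 Cplus (Cmult (RtoC uL) (psi0 psi)) (Cmult (RtoC s) (fst (psiL psi 0))) = RtoC 0 /\
 (forall k, Cplus (Cmult (RtoC t) (fst (psiL psi k))) (Cmult (RtoC s) (fst (psiL psi (S k)))) = RtoC 0) /\
 Cplus (Cmult (RtoC uL) (snd (psiL psi 0))) (Cmult (RtoC uR) (fst (psiR psi 0))) = RtoC 0 /\
 Cplus (Cmult (RtoC uR) (psi0 psi)) (Cmult (RtoC s) (snd (psiR psi 0))) = RtoC 0 /\
 (forall k, Cplus (Cmult (RtoC t) (fst (psiR psi (S k)))) (Cmult (RtoC s) (fst (psiR psi k))) = RtoC 0) /\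
 (forall k, Cplus (Cmult (RtoC t) (snd (psiR psi k))) (Cmult (RtoC s) (snd (psiR psi (S k)))) = RtoC 0).

Lemma ker_iff s t uL uR psi : H_SSH s t uL uR psi = St_zero <-> KEQ s t uL uR psi.
Proof.
  split.
  - intros E.
    assert (EL : forall k, psiL (H_SSH s t uL uR psi) k = C2zero) by (intros k; rewrite E; reflexivity).
    assert (ER : forall k, psiR (H_SSH s t uL uR psi) k = C2zero) by (intros k; rewrite E; reflexivity).
    assert (E0 : psi0 (H_SSH s t uL uR psi) = RtoC 0) by (rewrite E; reflexivity).
    pose proof (EL 0%nat) as L0. rewrite HL0 in L0. apply pair_eq0 in L0.
    pose proof (ER 0%nat) as R0. rewrite HR0 in R0. apply pair_eq0 in R0.
    rewrite H00 in E0.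
    assert (LS : forall k, Cplus (Cmult (RtoC t) (snd (psiL psi (S (S k))))) (Cmult (RtoC s) (snd (psiL psi (S k)))) = RtoC 0 /\
      Cplus (Cmult (RtoC t) (fst (psiL psi k))) (Cmult (RtoC s) (fst (psiL psi (S k)))) = RtoC 0)
      by (intros k; pose proof (EL (S k)) as X; rewrite HLS in X; exact (pair_eq0 _ _ X)).
    assert (RS : forall k, Cplus (Cmult (RtoC t) (snd (psiR psi k))) (Cmult (RtoC s) (snd (psiR psi (S k)))) = RtoC 0 /\
      Cplus (Cmult (RtoC t) (fst (psiR psi (S (S k))))) (Cmult (RtoC s) (fst (psiR psi (S k)))) = RtoC 0)
      by (intros k; pose proof (ER (S k)) as X; rewrite HRS in X; exact (pair_eq0 _ _ X)).
    repeat split; try tauto.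
    + intros [|k]; [tauto| exact (proj1 (LS k))].
    + intros k; exact (proj2 (LS k)).
    + intros [|k]; [tauto| exact (proj2 (RS k))].
    + intros k; exact (proj1 (RS k)).
  - intros (K1 & K2 & K3 & K4 & K5 & K6 & K7).
    apply St_eq.
    + intros [|k]; [rewrite HL0 | rewrite HLS]; change (psiL St_zero _) with C2zero; unfold C2zero; f_equal; auto.
    + rewrite H00; auto.
    + intros [|k]; [rewrite HR0 | rewrite HRS]; change (psiR St_zero _) with C2zero; unfold C2zero; f_equal; auto.
Qed.
Ltac creal := rewrite <- ?RtoC_mult, <- ?RtoC_plus; f_equal.

Lemma Cmult_reg (a : R) (x : C) : a <> 0 -> Cmult x (RtoC a) = RtoC 0 -> x = RtoC 0.
Proof.
  intros Ha E. pose proof (RtoC_neq a Ha).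
  transitivity (Cmult (Cmult x (RtoC a)) (Cinv (RtoC a))); [field; auto|]. rewrite E. ring.
Qed.

Definition vA (s t uL uR : R) : St :=
  mkSt (fun k => (RtoC (- uL / s * (- t / s) ^ k), RtoC (0 * (- t / s) ^ k))) (RtoC 1)
       (fun k => (RtoC (0 * (- t / s) ^ k), RtoC (- uR / s * (- t / s) ^ k))).

Lemma abs_ratio p q : Rabs q < Rabs p -> Rabs (- q / p) < 1.
Proof.
  intros H. assert (p <> 0) by (intro; subst; rewrite Rabs_R0 in H; pose proof (Rabs_pos q); lra).
  unfold Rdiv. rewrite Rabs_mult, Rabs_Ropp, Rabs_inv.
  pose proof (Rabs_pos_lt p H0). apply (Rmult_lt_reg_r (Rabs p)); auto. field_simplify; lra.
Qed.

Lemma caseA s t uL uR : Rabs t < Rabs s -> ker_dim (H_SSH s t uL uR) 1.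
Proof.
  intros Hts.
  assert (Hs : s <> 0) by (intro; subst; rewrite Rabs_R0 in Hts; pose proof (Rabs_pos t); lra).
  assert (Hr : Rabs (- t / s) < 1) by (apply abs_ratio; auto).
  set (r := - t / s) in *.
  exists (fun _ => vA s t uL uR). split; [|split].
  - intros i Hi. split.
    + split; [apply l2_geomC | apply l2_geomC]; auto.
    + apply ker_iff. unfold vA, KEQ; cbn [psiL psiR psi0 fst snd].
      repeat split; intros; creal; rewrite <- ?tech_pow_Rmult; unfold r; simpl; field; auto.
  - intros c E i Hi. assert (i = 0%nat) by lia. subst i.
    apply (f_equal psi0) in E. cbn in E. rewrite <- E. ring.
  - intros psi [[HlL HlR] Hk]. apply ker_iff in Hk. destruct Hk as (K1 & K2 & K3 & K4 & K5 & K6 & K7).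
    set (cc := psi0 psi).
    assert (Hle : Rabs t <= Rabs s) by lra.
    assert (A0 : fst (psiL psi 0) = Cmult (RtoC (- uL / s)) cc) by (apply solve_rec; auto; rewrite Cplus_comm; exact K2).
    assert (AS : forall k, fst (psiL psi (S k)) = Cmult (RtoC r) (fst (psiL psi k))) by (intros k; apply solve_rec; auto; rewrite Cplus_comm; exact (K3 k)).
    pose proof (geom_rec (fun k => fst (psiL psi k)) r AS) as AL.
    assert (BL : forall k, snd (psiL psi k) = RtoC 0).
    { apply (nondec_zero (fun k => snd (psiL psi k))); [|exact (l2_snd _ HlL)].
      intros k; apply (grow s t _ _ Hle Hs (K1 k)). }
    assert (AR : forall k, fst (psiR psi k) = RtoC 0).
    { apply (nondec_zero (fun k => fst (psiR psi k))); [|exact (l2_fst _ HlR)].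
      intros k; apply (grow s t _ _ Hle Hs (K6 k)). }
    assert (B0 : snd (psiR psi 0) = Cmult (RtoC (- uR / s)) cc) by (apply solve_rec; auto; rewrite Cplus_comm; exact K5).
    assert (BS : forall k, snd (psiR psi (S k)) = Cmult (RtoC r) (snd (psiR psi k))) by (intros k; apply solve_rec; auto; rewrite Cplus_comm; exact (K7 k)).
    pose proof (geom_rec (fun k => snd (psiR psi k)) r BS) as BR.
    exists (fun _ => cc). apply St_eq; [intros k| |intros k]; cbn.
    + apply injective_projections; cbn.
      * rewrite AL, A0, RtoC_mult. unfold r. ring.
      * rewrite BL, RtoC_mult. ring.
    + unfold cc; ring.
    + apply injective_projections; cbn.
      * rewrite AR, RtoC_mult. ring.
      * rewrite BR, B0, !RtoC_mult. unfold r. ring.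
Qed.
Lemma caseB_facts s t uL uR psi : Rabs s < Rabs t -> in_ker (H_SSH s t uL uR) psi ->
 (forall k, fst (psiR psi k) = Cmult (fst (psiR psi 0)) (RtoC ((- s / t) ^ k))) /\
 (forall k, snd (psiR psi k) = RtoC 0) /\
 (forall k, fst (psiL psi k) = RtoC 0) /\
 (forall k, snd (psiL psi k) = Cmult (snd (psiL psi 0)) (RtoC ((- s / t) ^ k))) /\
 Cmult (RtoC uR) (psi0 psi) = RtoC 0 /\ Cmult (RtoC uL) (psi0 psi) = RtoC 0 /\
 Cplus (Cmult (RtoC uL) (snd (psiL psi 0))) (Cmult (RtoC uR) (fst (psiR psi 0))) = RtoC 0.
Proof.
  intros Hst [[HlL HlR] Hk]. apply ker_iff in Hk. destruct Hk as (K1 & K2 & K3 & K4 & K5 & K6 & K7).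
  assert (Ht : t <> 0) by (intro; subst; rewrite Rabs_R0 in Hst; pose proof (Rabs_pos s); lra).
  assert (Hle : Rabs s <= Rabs t) by lra.
  assert (AS : forall k, fst (psiR psi (S k)) = Cmult (RtoC (- s / t)) (fst (psiR psi k))) by (intros k; apply solve_rec; auto).
  assert (BS : forall k, snd (psiL psi (S k)) = Cmult (RtoC (- s / t)) (snd (psiL psi k))) by (intros k; apply solve_rec; auto).
  assert (BR : forall k, snd (psiR psi k) = RtoC 0).
  { apply (nondec_zero (fun k => snd (psiR psi k))); [|exact (l2_snd _ HlR)].
    intros k; apply (grow t s _ _ Hle Ht). rewrite Cplus_comm; exact (K7 k). }
  assert (AL : forall k, fst (psiL psi k) = RtoC 0).
  { apply (nondec_zero (fun k => fst (psiL psi k))); [|exact (l2_fst _ HlL)].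
    intros k; apply (grow t s _ _ Hle Ht). rewrite Cplus_comm; exact (K3 k). }
  repeat split; auto.
  - exact (geom_rec (fun k => fst (psiR psi k)) _ AS).
  - exact (geom_rec (fun k => snd (psiL psi k)) _ BS).
  - rewrite <- K5, BR. ring.
  - rewrite <- K2, AL. ring.
Qed.

Definition e1 (r : R) : St := mkSt (fun k => (RtoC (0 * r ^ k), RtoC (0 * r ^ k))) (RtoC 0)
                                   (fun k => (RtoC (1 * r ^ k), RtoC (0 * r ^ k))).
Definition e2 (r : R) : St := mkSt (fun k => (RtoC (0 * r ^ k), RtoC (1 * r ^ k))) (RtoC 0)
                                   (fun k => (RtoC (0 * r ^ k), RtoC (0 * r ^ k))).
Definition e3 (r : R) : St := mkSt (fun k => (RtoC (0 * r ^ k), RtoC (0 * r ^ k))) (RtoC 1)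
                                   (fun k => (RtoC (0 * r ^ k), RtoC (0 * r ^ k))).
Definition eB (r : R) (i : nat) : St := match i with O => e1 r | 1%nat => e2 r | _ => e3 r end.

Lemma caseB1 s t : Rabs s < Rabs t -> ker_dim (H_SSH s t 0 0) 3.
Proof.
  intros Hst.
  assert (Ht : t <> 0) by (intro; subst; rewrite Rabs_R0 in Hst; pose proof (Rabs_pos s); lra).
  assert (Hr : Rabs (- s / t) < 1) by (apply abs_ratio; auto).
  exists (eB (- s / t)). split; [|split].
  - intros i Hi. split.
    + destruct i as [|[|i]]; split; apply l2_geomC; auto.
    + apply ker_iff. destruct i as [|[|i]]; unfold eB, e1, e2, e3, KEQ; cbn [psiL psiR psi0 fst snd];
      repeat split; intros; creal; rewrite <- ?tech_pow_Rmult; simpl; field; auto.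
  - intros c E.
    pose proof (f_equal psi0 E) as E0. pose proof (f_equal (fun x => fst (psiR x 0)) E) as ER.
    pose proof (f_equal (fun x => snd (psiL x 0)) E) as EL. cbn in E0, ER, EL.
    intros i Hi. destruct i as [|[|[|i]]]; [| | |lia].
    + replace (1 * 1) with 1 in ER by ring. replace (0 * 1) with 0 in ER by ring. rewrite <- ER. ring.
    + replace (1 * 1) with 1 in EL by ring. replace (0 * 1) with 0 in EL by ring. rewrite <- EL. ring.
    + rewrite <- E0. ring.
  - intros psi Hpsi. destruct (caseB_facts s t 0 0 psi Hst Hpsi) as (AR & BR & AL & BL & _ & _ & _).
    exists (fun i => match i with O => fst (psiR psi 0) | 1%nat => snd (psiL psi 0) | _ => psi0 psi end).
    apply St_eq; [intros k| |intros k]; cbn.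
    + apply injective_projections; cbn.
      * rewrite AL, ?Rmult_0_l, ?Rmult_1_l. ring.
      * rewrite BL, ?Rmult_0_l, ?Rmult_1_l. ring.
    + ring.
    + apply injective_projections; cbn.
      * rewrite AR, ?Rmult_0_l, ?Rmult_1_l. ring.
      * rewrite BR, ?Rmult_0_l, ?Rmult_1_l. ring.
Qed.
Definition wB (r uL uR : R) : St := mkSt (fun k => (RtoC (0 * r ^ k), RtoC (- uR * r ^ k))) (RtoC 0)
                                   (fun k => (RtoC (uL * r ^ k), RtoC (0 * r ^ k))).

Lemma caseB2 s t uL uR : Rabs s < Rabs t -> ~ (uL = 0 /\ uR = 0) -> ker_dim (H_SSH s t uL uR) 1.
Proof.
  intros Hst Hu.
  assert (Ht : t <> 0) by (intro; subst; rewrite Rabs_R0 in Hst; pose proof (Rabs_pos s); lra).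
  assert (Hr : Rabs (- s / t) < 1) by (apply abs_ratio; auto).
  exists (fun _ => wB (- s / t) uL uR). split; [|split].
  - intros i Hi. split.
    + split; apply l2_geomC; auto.
    + apply ker_iff. unfold wB, KEQ; cbn [psiL psiR psi0 fst snd];
      repeat split; intros; creal; rewrite <- ?tech_pow_Rmult; simpl; field; auto.
  - intros c E i Hi. assert (i = 0%nat) by lia. subst i.
    pose proof (f_equal (fun x => fst (psiR x 0)) E) as ER.
    pose proof (f_equal (fun x => snd (psiL x 0)) E) as EL. cbn in ER, EL.
    rewrite ?pow_O, ?Rmult_1_r in ER, EL.
    destruct (Req_dec uL 0) as [HL|HL].
    + assert (HR : uR <> 0) by tauto.
      apply (Cmult_reg (- uR)); [lra|]. rewrite <- EL. ring.
    + apply (Cmult_reg uL); auto. rewrite <- ER. ring.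
  - intros psi Hpsi. destruct (caseB_facts s t uL uR psi Hst Hpsi) as (AR & BR & AL & BL & C1 & C2 & C3).
    set (aR0 := fst (psiR psi 0)) in *. set (bL0 := snd (psiL psi 0)) in *.
    assert (Hcc : psi0 psi = RtoC 0).
    { destruct (Req_dec uL 0) as [HL|HL].
      - assert (HR : uR <> 0) by tauto. apply (Cmult_reg uR); auto. rewrite Cmult_comm; auto.
      - apply (Cmult_reg uL); auto. rewrite Cmult_comm; auto. }
    destruct (Req_dec uL 0) as [HL|HL].
    + subst uL. assert (HR : uR <> 0) by tauto. pose proof (RtoC_neq _ HR) as HR'.
      assert (A0 : aR0 = RtoC 0).
      { apply (Cmult_reg uR); auto. rewrite <- C3. ring. }
      exists (fun _ => Cmult (Copp bL0) (Cinv (RtoC uR))).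
      apply St_eq; [intros k| |intros k]; cbn.
      * apply injective_projections; cbn.
        -- rewrite AL, ?Rmult_0_l. ring.
        -- rewrite BL, RtoC_mult, RtoC_opp. field; auto.
      * rewrite Hcc; ring.
      * apply injective_projections; cbn.
        -- rewrite AR, A0, ?Rmult_0_l. ring.
        -- rewrite BR, ?Rmult_0_l. ring.
    + pose proof (RtoC_neq _ HL) as HL'.
      assert (B1 : Cmult (RtoC uL) bL0 = Copp (Cmult (RtoC uR) aR0))
        by (rewrite <- (Cplus_0_l (Copp _)), <- C3; ring).
      assert (B0 : bL0 = Cmult (Copp (Cmult (RtoC uR) aR0)) (Cinv (RtoC uL))).
      { rewrite <- B1. field; auto. }
      exists (fun _ => Cmult aR0 (Cinv (RtoC uL))).
      apply St_eq; [intros k| |intros k]; cbn.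
      * apply injective_projections; cbn.
        -- rewrite AL, ?Rmult_0_l. ring.
        -- rewrite BL, B0, RtoC_mult, RtoC_opp. field; auto.
      * rewrite Hcc; ring.
      * apply injective_projections; cbn.
        -- rewrite AR, RtoC_mult. field; auto.
        -- rewrite BR, ?Rmult_0_l. ring.
Qed.

Theorem mainTheorem8 (s t uL uR : R) (hst : Rabs s <> Rabs t) :
  spectral_gap_at_0 (H_bulk (A_SSH t) (V_SSH s)) /\
  exists d : nat, Nat.Odd d /\ ker_dim (H_SSH s t uL uR) d.
Proof.
  split.
  - exists (Rabs (Rabs s - Rabs t)). split.
    + apply Rabs_pos_lt. lra.
    + intros lam Hl Hsp. apply Hsp. apply bulk_resolvent; auto.
  - destruct (Rlt_or_le (Rabs t) (Rabs s)) as [H|H].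
    + exists 1%nat. split; [exists 0%nat; reflexivity | apply caseA; auto].
    + assert (H' : Rabs s < Rabs t) by lra.
      destruct (Req_dec uL 0) as [HL|HL]; destruct (Req_dec uR 0) as [HR|HR].
      * subst. exists 3%nat. split; [exists 1%nat; reflexivity | apply caseB1; auto].
      * exists 1%nat. split; [exists 0%nat; reflexivity | apply caseB2; auto; tauto].
      * exists 1%nat. split; [exists 0%nat; reflexivity | apply caseB2; auto; tauto].
      * exists 1%nat. split; [exists 0%nat; reflexivity | apply caseB2; auto; tauto].
Qed.
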